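(* Let $n\geq3$, $(R,\Lambda)$ a form ring, $C'\subseteq\mathrm{center}(R)$ a subring, $C$ the subring of $R$ of all finite sums of elements $c\bar c$ and $-c\bar c$ with $c\in C'$, and assume $R$ is a Noetherian $C$-module. Let $(I,\Gamma)$ be a form ideal of $(R,\Lambda)$ and $m$ a maximal ideal of $C$. Then there is $s_0\in S_m$ such that (1) if $x\in s_0R$ and $tx\in I$ for some $t\in S_m$, then $x\in I$; (2) if $x\in s_0R$ and $tx\in\Gamma$ for some $t\in S_m$, then $x\in\Gamma$. Moreover, $\phi_m$ is injective on $\psi(U_{2n}((R,\Lambda),(s_0R,s_0\Lambda)))$.
   Context: Rings are associative with $1\neq0$; $r\mapsto\bar r$ is an involution on $R$, $\lambda\in\mathrm{center}(R)$ with $\lambda\bar\lambda=1$. A form parameter is an additive subgroup $\Lambda$ with $\{r-\lambda\bar r\}\subseteq\Lambda\subseteq\{r:r=-\lambda\bar r\}$ and $r\Lambda\bar r\subseteq\Lambda$ for all $r$. A form ideal $(I,\Gamma)$: $I$ an ideal with $\bar I=I$, $\Gamma$ an additive subgroup with $\{\xi-\lambda\bar\xi:\xi\in I\}+\langle\zeta\alpha\bar\zeta:\zeta\in I,\alpha\in\Lambda\rangle\subseteq\Gamma\subseteq I\cap\Lambda$ and $\alpha\Gamma\bar\alpha\subseteq\Gamma$ for all $\alpha\in R$. Indices $\Omega=\{1,\dots,n,-n,\dots,-1\}$; for columns $u,v$: $\mathbbm{f}(u,v)=\sum_{i=1}^n\bar u_iv_{-i}$, $\mathbbm{h}(u,v)=\sum_{i=1}^n(\bar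 u_iv_{-i}+\lambda\bar u_{-i}v_i)$. $U_{2n}(R,\Lambda)$ = all $\sigma\in GL_{2n}(R)$ with $\mathbbm{h}(\sigma u,\sigma v)=\mathbbm{h}(u,v)$ and $\mathbbm{f}(\sigma u,\sigma u)-\mathbbm{f}(u,u)\in\Lambda$ for all $u,v$. For an involution invariant ideal $J$ and additive subgroup $\Delta\subseteq J\cap\Lambda$ (e.g. $(I,\Gamma)$ or $(s_0R,s_0\Lambda)$), $U_{2n}((R,\Lambda),(J,\Delta))$ = all $\sigma\in U_{2n}(R,\Lambda)$ with $\sigma\equiv e\pmod J$ and $\mathbbm{f}(\sigma u,\sigma u)-\mathbbm{f}(u,u)\in\Delta$ for all $u$. Localization: $C$ is central and fixed by the involution. $S_m=C\setminus m$, $R_m=S_m^{-1}R$ (involution $\overline{r/s}=\bar r/s$), $\Lambda_m=S_m^{-1}\Lambda$, $I_m=S_m^{-1}I$, $\Gamma_m=S_m^{-1}\Gamma$; $F_m:U_{2n}(R,\Lambda)\to U_{2n}(R_m,\Lambda_m)$ applies the localization map entrywise; $\psi:U_{2n}(R,\Lambda)\to U_{2n}(R,\Lambda)/U_{2n}((R,\Lambda),(I,\Gamma))$ is the canonical map; $\phi_m:U_{2n}(R,\Lambda)/U_{2n}((R,\Lambda),(I,\Gamma))\to U_{2n}(R_m,\Lambda_m)/U_{2n}((R_m,\Lambda_m),(I_m,\Gamma_m))$ is induced by $F_m$. *)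

(* Defs.v *)
From HB Require Import structures.
From mathcomp Require Import all_boot all_algebra.
Set Implicit Arguments.
Unset Strict Implicit.
Unset Printing Implicit Defensive.
Import GRing.Theory.
Local Open Scope ring_scope.

Section RingDefs.
Variable R : nzRingType.

Definition is_involution (bar : R -> R) : Prop :=
  [/\ (forall x y, bar (x + y) = bar x + bar y),
      (forall x y, bar (x * y) = bar y * bar x),
      (forall x, bar (bar x) = x) & bar 1 = 1].

Definition central (c : R) : Prop := forall r : R, c * r = r * c.

Definition add_subgroup (A : R -> Prop) : Prop :=
  A 0 /\ (forall x y, A x -> A y -> A (x - y)).

Definition form_parameter (bar : R -> R) (lam : R) (L : R -> Prop) : Prop :=
  [/\ add_subgroup L,
      (forall r, L (r - lam * bar r)),
      (forall r, L r -> r = - (lam * bar r)) &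
      (forall r a, L a -> L (r * a * bar r))].

Definition form_ring (bar : R -> R) (lam : R) (L : R -> Prop) : Prop :=
  [/\ is_involution bar, central lam, lam * bar lam = 1 &
      form_parameter bar lam L].

Definition two_sided_ideal (I : R -> Prop) : Prop :=
  [/\ add_subgroup I, (forall r x, I x -> I (r * x)) &
      (forall r x, I x -> I (x * r))].

Definition form_ideal (bar : R -> R) (lam : R) (L I G : R -> Prop) : Prop :=
  two_sided_ideal I /\
  (forall x, I (bar x) <-> I x) /\
  add_subgroup G /\
  (forall x, I x -> G (x - lam * bar x)) /\
  (forall z a, I z -> L a -> G (z * a * bar z)) /\
  (forall x, G x -> I x /\ L x) /\
  (forall a x, G x -> G (a * x * bar a)).

(* Indices Omega = {1..n,-n..-1} are the positions 'I_(n+n):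
   position p < n stands for index p+1, and position rev_ord p
   (= 2n-1-p) stands for index -(p+1). *)
Definition fform (bar : R -> R) (n : nat) (u v : 'cV[R]_(n + n)) : R :=
  \sum_(i < n) bar (u (lshift n i) 0) * v (rev_ord (lshift n i)) 0.

Definition hform (bar : R -> R) (lam : R) (n : nat) (u v : 'cV[R]_(n + n)) : R :=
  \sum_(i < n) (bar (u (lshift n i) 0) * v (rev_ord (lshift n i)) 0
                + lam * bar (u (rev_ord (lshift n i)) 0) * v (lshift n i) 0).

Definition invertible_mx (n : nat) (s : 'M[R]_(n + n)) : Prop :=
  exists t : 'M[R]_(n + n), s *m t = 1%:M /\ t *m s = 1%:M.

Definition unitary (bar : R -> R) (lam : R) (L : R -> Prop) (n : nat)
  (s : 'M[R]_(n + n)) : Prop :=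
  [/\ invertible_mx s,
      (forall u v, hform bar lam (s *m u) (s *m v) = hform bar lam u v) &
      (forall u, L (fform bar (s *m u) (s *m u) - fform bar u u))].

Definition unitary_rel (bar : R -> R) (lam : R) (L J D : R -> Prop) (n : nat)
  (s : 'M[R]_(n + n)) : Prop :=
  [/\ unitary bar lam L s,
      (forall i j, J (s i j - (1%:M : 'M[R]_(n + n)) i j)) &
      (forall u, D (fform bar (s *m u) (s *m u) - fform bar u u))].

Definition coset_eq (n : nat) (N : 'M[R]_(n + n) -> Prop) (s t : 'M[R]_(n + n)) : Prop :=
  exists si : 'M[R]_(n + n), [/\ si *m s = 1%:M, s *m si = 1%:M & N (si *m t)].

Definition subring (A : R -> Prop) : Prop :=
  [/\ add_subgroup A, A 1 & (forall x y, A x -> A y -> A (x * y))].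

Inductive sums_cbarc (bar : R -> R) (Cp : R -> Prop) : R -> Prop :=
| sc_nil : sums_cbarc bar Cp 0
| sc_pos x c : sums_cbarc bar Cp x -> Cp c -> sums_cbarc bar Cp (x + c * bar c)
| sc_neg x c : sums_cbarc bar Cp x -> Cp c -> sums_cbarc bar Cp (x - c * bar c).

Definition C_submodule (C M : R -> Prop) : Prop :=
  add_subgroup M /\ (forall c x, C c -> M x -> M (c * x)).

Definition noetherian_module (C : R -> Prop) : Prop :=
  forall M : R -> Prop, C_submodule C M ->
    exists gs : seq R, (forall i, (i < size gs)%N -> M gs`_i) /\
      (forall x, M x -> exists cs : seq R,
         [/\ size cs = size gs, (forall i, (i < size cs)%N -> C cs`_i) &
             x = \sum_(i < size gs) cs`_i * gs`_i]).

Definition ideal_of (C m : R -> Prop) : Prop :=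
  [/\ (forall x, m x -> C x), add_subgroup m &
      (forall c x, C c -> m x -> m (c * x))].

Definition maximal_ideal_of (C m : R -> Prop) : Prop :=
  [/\ ideal_of C m, ~ m 1 &
      (forall m', ideal_of C m' -> (forall x, m x -> m' x) -> ~ m' 1 ->
         forall x, m' x -> m x)].

Definition Sm (C m : R -> Prop) (c : R) : Prop := C c /\ ~ m c.

Definition mul_set (s0 : R) (A : R -> Prop) (x : R) : Prop :=
  exists a, A a /\ x = s0 * a.

End RingDefs.

(* F : R -> R' is (a model of) the localization S^{-1} R at a central
   multiplicative set S (characterized up to isomorphism by the universal
   properties below). *)
Definition is_localization (R R' : nzRingType) (S : R -> Prop)
  (F : {rmorphism R -> R'}) : Prop :=
  [/\ (forall s, S s -> exists y, F s * y = 1 /\ y * F s = 1),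
      (forall r, F r = 0 -> exists s, S s /\ s * r = 0) &
      (forall x : R', exists r s, S s /\ x * F s = F r)].

Definition loc_set (R R' : nzRingType) (S : R -> Prop)
  (F : {rmorphism R -> R'}) (A : R -> Prop) (x : R') : Prop :=
  exists a s, [/\ A a, S s & x * F s = F a].

(* Main.v *)
Require Import Defs.
From HB Require Import structures.
From mathcomp Require Import all_boot all_algebra.
Import GRing.Theory.
Local Open Scope ring_scope.

Set Implicit Arguments.
Section Aux.
Variable R : nzRingType.

Lemma as_add (P : R -> Prop) x y : add_subgroup P -> P x -> P y -> P (x + y).
Proof.
move=> [P0 PB] Px Py.
have := PB x (0 - y) Px (PB _ _ P0 Py).
by rewrite sub0r opprK.
Qed.

Lemma as_sum (P : R -> Prop) k (f : 'I_k -> R) :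
  add_subgroup P -> (forall i, P (f i)) -> P (\sum_(i < k) f i).
Proof.
move=> HP Hf; elim/big_ind: _ => //; first by case: HP.
by move=> x y; apply: as_add.
Qed.

Variable bar : R -> R.
Hypothesis inv : is_involution bar.
Variable Cp : R -> Prop.
Hypothesis Cps : subring Cp.
Hypothesis Cpc : forall c, Cp c -> central c.

Lemma bar_central c : central c -> central (bar c).
Proof.
case: inv => badd bmul binv b1 Hc r.
by rewrite -{1}(binv r) -bmul -Hc bmul binv.
Qed.

Local Notation C := (sums_cbarc bar Cp).

Lemma C_central x : C x -> central x.
Proof.
elim=> [r|y c _ IH Hc r|y c _ IH Hc r]; first by rewrite mul0r mulr0.
- have h1 := Cpc Hc; have h2 := bar_central h1.
  by rewrite mulrDl mulrDr IH -mulrA h2 mulrA (h1 r) mulrA.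
- have h1 := Cpc Hc; have h2 := bar_central h1.
  by rewrite mulrBl mulrBr IH -mulrA h2 mulrA (h1 r) mulrA.
Qed.

Lemma C_add x y : C x -> C y -> C (x + y).
Proof.
move=> Cx; elim=> [|z c _ IH Hc|z c _ IH Hc]; first by rewrite addr0.
- by rewrite addrA; apply: sc_pos.
- by rewrite addrA; apply: sc_neg.
Qed.

Lemma C_opp x : C x -> C (- x).
Proof.
elim=> [|z c _ IH Hc|z c _ IH Hc]; first by rewrite oppr0; apply: sc_nil.
- by rewrite opprD; apply: sc_neg.
- by rewrite opprB addrC; apply: sc_pos.
Qed.

Lemma C_sub x y : C x -> C y -> C (x - y).
Proof. by move=> Cx Cy; apply: C_add => //; apply: C_opp. Qed.

Lemma C_cc c y : Cp c -> C y -> C (c * bar c * y).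
Proof.
case: (inv) => badd bmul binv b1.
case: Cps => _ _ Cpm.
move=> Hc; elim=> [|z d _ IH Hd|z d _ IH Hd]; first by rewrite mulr0; apply: sc_nil.
- have e : c * bar c * (d * bar d) = c * d * bar (c * d).
    by rewrite bmul -mulrA (bar_central (Cpc Hc)) !mulrA.
  by rewrite mulrDr e; apply: sc_pos => //; apply: Cpm.
- have e : c * bar c * (d * bar d) = c * d * bar (c * d).
    by rewrite bmul -mulrA (bar_central (Cpc Hc)) !mulrA.
  by rewrite mulrBr e; apply: sc_neg => //; apply: Cpm.
Qed.

Lemma C_mul x y : C x -> C y -> C (x * y).
Proof.
move=> Cx Cy; elim: Cx => [|z c _ IH Hc|z c _ IH Hc]; first by rewrite mul0r; apply: sc_nil.
- by rewrite mulrDl; apply: C_add => //; apply: C_cc.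
- by rewrite mulrBl; apply: C_sub => //; apply: C_cc.
Qed.

Lemma C1 : C 1.
Proof.
case: inv => _ _ _ b1; case: Cps => _ Cp1 _.
have -> : (1 : R) = 0 + 1 * bar 1 by rewrite b1 mulr1 add0r.
by apply: sc_pos => //; apply: sc_nil.
Qed.

Lemma C0 : C 0.
Proof. exact: sc_nil. Qed.

Variable m : R -> Prop.
Hypothesis mmax : maximal_ideal_of C m.

Lemma S_mul a b : Sm C m a -> Sm C m b -> Sm C m (a * b).
Proof.
case: mmax => [[mC msub mmul] m1 mx].
move=> [Ca na] [Cb nb]; split; first exact: C_mul.
move=> mab.
pose m' x := exists y c, [/\ m y, C c & x = y + c * a].
have m0 : m 0 by case: msub.
have nn : ~ ~ m' 1.
  move=> H; apply: na; apply: (mx m') => //.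
  - split.
    + move=> x [y [c [my Cc ->]]]; apply: C_add; first exact: mC.
      exact: C_mul.
    + split; first by exists 0, 0; rewrite mul0r addr0; split => //; apply: C0.
      move=> x z [y1 [c1 [m1' C1' ->]]] [y2 [c2 [m2 C2 ->]]].
      exists (y1 - y2), (c1 - c2); split.
      * by case: msub => _; apply.
      * exact: C_sub.
      * by rewrite mulrBl opprD addrACA.
    + move=> c x Cc [y [c' [my Cc' ->]]]; exists (c * y), (c * c'); split.
      * exact: mmul.
      * exact: C_mul.
      * by rewrite mulrDr mulrA.
  - by move=> x mx'; exists x, 0; rewrite mul0r addr0; split => //; apply: C0.
  - by exists 0, 1; rewrite mul1r add0r; split => //; apply: C1.
apply: nn => -[y [c [my Cc e]]]; apply: nb.
have -> : b = b * y + c * (a * b).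
  by rewrite mulrA (C_central Cb y) -mulrDl -e mul1r.
apply: as_add => //; apply: mmul => //.
Qed.


Lemma S1 : Sm C m 1.
Proof. by case: mmax => _ m1 _; split => //; apply: C1. Qed.

Lemma sat (P : R -> Prop) : add_subgroup P ->
  (forall c x, C c -> P x -> P (c * x)) -> noetherian_module C ->
  exists s1, Sm C m s1 /\ (forall y t, Sm C m t -> P (t * y) -> P (s1 * y)).
Proof.
move=> HP PC noeth.
pose K x := exists t, Sm C m t /\ P (t * x).
have KM : C_submodule C K.
  split; first split.
  - by exists 1; split; [exact: S1 | rewrite mulr0; case: HP].
  - move=> x y [t1 [St1 Px]] [t2 [St2 Py]]; exists (t1 * t2); split.
      exact: S_mul.
    have -> : t1 * t2 * (x - y) = t2 * (t1 * x) - t1 * (t2 * y).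
      by rewrite mulrBr !mulrA (C_central St1.1 t2).
    case: HP => _; apply; apply: PC => //; [exact: St2.1 | exact: St1.1].
  - move=> c x Cc [t [St Px]]; exists t; split => //.
    by rewrite mulrA -(C_central Cc t) -mulrA; apply: PC.
have [gs [Hgs Hspan]] := noeth K KM.
have [s1 [Ss1 Hs1]] : exists s1, Sm C m s1 /\
    forall i, (i < size gs)%N -> P (s1 * gs`_i).
  elim: gs Hgs {Hspan} => [|g gs IH] Hgs.
    by exists 1; split => //; exact: S1.
  have [t [St Pt]] := Hgs 0%N isT.
  have [s1 [Ss1 Hs1]] : exists s1, Sm C m s1 /\
      forall i, (i < size gs)%N -> P (s1 * gs`_i).
    by apply: IH => i Hi; apply: (Hgs i.+1).
  exists (t * s1); split; first exact: S_mul.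
  case=> [_|i Hi] /=.
    by rewrite (C_central St.1 s1) -mulrA; apply: PC => //; exact: Ss1.1.
  by rewrite -mulrA; apply: PC; [exact: St.1 | apply: Hs1].
exists s1; split => // y t St Pty.
have [cs [Hsz Hcs ->]] := Hspan y (ex_intro _ t (conj St Pty)).
rewrite mulr_sumr; apply: as_sum => // i.
rewrite mulrA (C_central Ss1.1) -mulrA; apply: PC.
  by apply: Hcs; rewrite Hsz.
exact: Hs1.
Qed.

End Aux.

Unset Implicit Arguments.

Set Implicit Arguments.
Lemma sub3 (R : nzRingType) (a b c : R) : a - b = (a - c) - (b - c).
Proof. rewrite opprB addrA; congr (_ + _). rewrite -addrA. have -> : -c + c = 0 := addNr c. by rewrite addr0. Qed.

Lemma sub4 (R : nzRingType) (a b c : R) : a - b = (c - b) - (c - a).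
Proof. rewrite [RHS]addrC opprB addrA; congr (_ + _). rewrite -addrA. have -> : -c + c = 0 := addNr c. by rewrite addr0. Qed.

Lemma fform_map (R R' : nzRingType) (F : {rmorphism R -> R'}) bar bar' n
  (u v : 'cV[R]_(n + n)) : (forall r, bar' (F r) = F (bar r)) ->
  fform bar' (map_mx F u) (map_mx F v) = F (fform bar u v).
Proof.
move=> hb; rewrite /fform rmorph_sum; apply: eq_bigr => i _.
by rewrite !mxE rmorphM hb.
Qed.

Lemma loc_pull (R R' : nzRingType) (S : R -> Prop) (F : {rmorphism R -> R'})
  (P : R -> Prop) x : is_localization S F ->
  (forall a b, S a -> S b -> S (a * b)) -> (forall s, S s -> central s) ->
  (forall s a, S s -> P a -> P (s * a)) ->
  loc_set S F P (F x) -> exists t, S t /\ P (t * x).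
Proof.
move=> [_ ker _] Smul Sc PS [a [s [Pa Ss e]]].
have [u [Su eu]] : exists u, S u /\ u * (x * s - a) = 0.
  by apply: ker; rewrite rmorphB rmorphM e subrr.
exists (u * s); split; first exact: Smul.
have -> : u * s * x = u * a.
  apply/eqP; rewrite -subr_eq0 -mulrA (Sc s Ss x) -mulrBr eu //.
by apply: PS.
Qed.

Unset Implicit Arguments.

Theorem lemma4p2 (R : nzRingType) (bar : R -> R) (lam : R) (L : R -> Prop)
  (n : nat) (Cp I G m : R -> Prop)
  (R' : nzRingType) (F : {rmorphism R -> R'}) (bar' : R' -> R') :
  (3 <= n)%N ->
  form_ring bar lam L ->
  subring Cp -> (forall c, Cp c -> central c) ->
  noetherian_module (sums_cbarc bar Cp) ->
  form_ideal bar lam L I G ->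
  maximal_ideal_of (sums_cbarc bar Cp) m ->
  (* R' = R_m with its involution bar', F = localization map *)
  is_localization (Sm (sums_cbarc bar Cp) m) F ->
  is_involution bar' -> (forall r, bar' (F r) = F (bar r)) ->
  let S := Sm (sums_cbarc bar Cp) m in
  exists s0 : R, [/\ S s0,
    (forall x t, mul_set s0 (fun _ => True) x -> S t -> I (t * x) -> I x),
    (forall x t, mul_set s0 (fun _ => True) x -> S t -> G (t * x) -> G x) &
    (forall s t : 'M[R]_(n + n),
       unitary_rel bar lam L (mul_set s0 (fun _ => True)) (mul_set s0 L) s ->
       unitary_rel bar lam L (mul_set s0 (fun _ => True)) (mul_set s0 L) t ->
       coset_eq (unitary_rel bar' (F lam) (loc_set S F L) (loc_set S F I)
                   (loc_set S F G) (n:=n)) (map_mx F s) (map_mx F t) ->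
       coset_eq (unitary_rel bar lam L I G (n:=n)) s t)].
Proof.
move=> _ [inv _ _ [Lsub _ _ _]] Cps Cpc noeth.
move=> [[Isub Il _] [_ [Gsub [_ [_ [_ Gconj]]]]]] mmax loc _ hb S.
have Smul : forall a b, S a -> S b -> S (a * b).
  by move=> a b; apply: (S_mul inv Cps Cpc mmax).
have Sc : forall s, S s -> central s.
  by move=> s [Cs _]; apply: (C_central inv Cpc Cs).
have GC : forall c x, sums_cbarc bar Cp c -> G x -> G (c * x).
  move=> c x Cc Gx; elim: Cc => [|y d _ IH Hd|y d _ IH Hd].
  - by rewrite mul0r; case: Gsub.
  - rewrite mulrDl; apply: as_add => //.
    rewrite -mulrA (bar_central inv (Cpc d Hd) x) mulrA; exact: Gconj.
  - rewrite mulrBl; case: Gsub => _; apply => //.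
    rewrite -mulrA (bar_central inv (Cpc d Hd) x) mulrA; exact: Gconj.
have IC : forall c x, sums_cbarc bar Cp c -> I x -> I (c * x).
  by move=> c x _; apply: Il.
have [s1 [Ss1 H1]] := sat inv Cps Cpc mmax Isub IC noeth.
have [s2 [Ss2 H2]] := sat inv Cps Cpc mmax Gsub GC noeth.
pose s0 := s1 * s2.
have P1 : forall x t, mul_set s0 (fun _ => True) x -> S t -> I (t * x) -> I x.
  move=> x t [a [_ ->]] St It; rewrite /s0 -mulrA.
  apply: (H1 (s2 * a) (t * s1)); first exact: Smul.
  by rewrite !mulrA -(mulrA t) in It *.
have P2 : forall x t, mul_set s0 (fun _ => True) x -> S t -> G (t * x) -> G x.
  move=> x t [a [_ ->]] St Gt; rewrite /s0 (Sc s1 Ss1 s2) -mulrA.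
  apply: (H2 (s1 * a) (t * s2)); first exact: Smul.
  by rewrite /s0 (Sc s1 Ss1 s2) in Gt; rewrite !mulrA -(mulrA t) in Gt *.
have s0c : central s0 by apply: Sc; exact: Smul.
have Jsub : add_subgroup (mul_set s0 (fun _ => True)).
  split; first by exists 0; rewrite mulr0.
  by move=> x y [a [_ ->]] [b [_ ->]]; exists (a - b); rewrite mulrBr.
exists s0; split => //; first exact: Smul.
move=> s t [[[si [ssi sis]] hs fs] Js Ds] [[[ti [tti tit]] ht ft] Jt Dt].
move=> [si' [e1 e2 Nloc]].
have esi : si' = map_mx F si.
  by rewrite -[si']mulmx1 -(map_mx1 F) -ssi map_mxM mulmxA e1 mul1mx.
rewrite esi -map_mxM in Nloc.
case: Nloc => [_ NJ ND].
have sw : forall u : 'cV[R]_(n + n), s *m (si *m t *m u) = t *m u.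
  by move=> u; rewrite !mulmxA ssi mul1mx.
exists si; split => //; split.
- split.
  + exists (ti *m s); split.
      by rewrite mulmxA -(mulmxA si) tti mulmx1 sis.
    by rewrite mulmxA -(mulmxA ti) ssi mulmx1 tit.
  + by move=> u v; rewrite -(hs (si *m t *m u)) !sw ht.
  + move=> u; rewrite (sub4 _ _ _ (fform bar (t *m u) (t *m u))).
    case: Lsub => _; apply; first exact: ft.
    by have := fs (si *m t *m u); rewrite sw.
- move=> i j.
  have ej : (si *m t) i j - (1%:M : 'M[R]_(n + n)) i j = (si *m (t - s)) i j.
    by rewrite mulmxBr sis !mxE.
  have Jx : mul_set s0 (fun _ => True) ((si *m t) i j - (1%:M : 'M[R]_(n + n)) i j).
    rewrite ej mxE; apply: as_sum => // k.
    have [a [_ ea]] := Jt k j; have [b [_ eb]] := Js k j.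
    exists (si i k * (a - b)); split => //.
    rewrite !mxE; have -> : t k j - s k j = s0 * a - s0 * b by rewrite -ea -eb -sub3.
    rewrite -mulrBr.
    by rewrite mulrA (s0c (si i k)) -mulrA.

  have := NJ i j.
  have -> : map_mx F (si *m t) i j - (1%:M : 'M[R']_(n + n)) i j
      = F ((si *m t) i j - (1%:M : 'M[R]_(n + n)) i j).
    by rewrite rmorphB !mxE ?rmorph_nat ?rmorphMn ?rmorph1.
  move=> Hl; have [u [Su Iu]] := loc_pull _ loc Smul Sc (fun s a _ Ia => Il s a Ia) Hl.
  exact: (P1 _ u Jx Su Iu).
- move=> u.
  have Jx : mul_set s0 (fun _ => True)
      (fform bar (si *m t *m u) (si *m t *m u) - fform bar u u).
    rewrite (sub4 _ _ _ (fform bar (t *m u) (t *m u))).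
    have [a [_ ea]] := Dt u.
    have [b [_ eb]] := Ds (si *m t *m u).
    rewrite sw in eb; rewrite ea eb.
    by exists (a - b); rewrite mulrBr.
  have := ND (map_mx F u).
  rewrite -map_mxM !(@fform_map _ _ F bar bar' n _ _ hb) -rmorphB => Hl.
  have [w [Sw Gw]] := loc_pull _ loc Smul Sc (fun s a Ss Ga => GC s a Ss.1 Ga) Hl.
  exact: (P2 _ w Jx Sw Gw).
Qed.
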